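(* Let $k<n$ be positive integers and let $\mathcal{C}\subseteq\mathbb{F}_{q^m}^n$ be an $[n,k]$ linear code with a systematic generator matrix $G=[I_k\,|\,A]$, where $A\in\mathcal{M}_{k,n-k}(\mathbb{F}_{q^m})$. Let $\mathcal{S}=\{A_{ij}:1\le i\le k,\ 1\le j\le n-k\}$. Then: (1) If $\mathcal{S}\subseteq\mathbb{F}_q$, then every $\mathbb{F}_q$-linear automorphism $\varphi$ of $\mathbb{F}_{q^m}$ satisfies $\varphi(\mathcal{C})=\mathcal{C}$; in particular $\varphi$ is linear on $\mathcal{C}$. (2) If some $\alpha\in\mathcal{S}$ is a polynomial element of $\mathbb{F}_{q^m}$ over $\mathbb{F}_q$, then an $\mathbb{F}_q$-linear automorphism $\varphi$ of $\mathbb{F}_{q^m}$ is fully linear over $\mathbb{F}_{q^m}$ if and only if $\varphi$ is linear on $\mathcal{C}$.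
   Context: $q$ is a prime power (the paper takes $q$ a power of $2$). $I_k$ is the $k\times k$ identity matrix. An element $\alpha\in\mathbb{F}_{q^m}$ is a polynomial element over $\mathbb{F}_q$ if $1,\alpha,\dots,\alpha^{m-1}$ form an $\mathbb{F}_q$-basis of $\mathbb{F}_{q^m}$. An $\mathbb{F}_q$-linear automorphism of $\mathbb{F}_{q^m}$ is a bijective $\mathbb{F}_q$-linear map $\varphi:\mathbb{F}_{q^m}\to\mathbb{F}_{q^m}$, applied componentwise to vectors, with $\varphi(\mathcal{V})=\{\varphi(\bm{v}):\bm{v}\in\mathcal{V}\}$. $\varphi$ is linear on an $\mathbb{F}_{q^m}$-linear code $\mathcal{C}$ if $\varphi(\mathcal{C})$ is an $\mathbb{F}_{q^m}$-linear subspace; $\varphi$ is fully linear over $\mathbb{F}_{q^m}$ if it is linear on every $\mathbb{F}_{q^m}$-linear code of every length. *)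

(* Defs.v *)
From HB Require Import structures.
From mathcomp Require Import all_boot all_order all_algebra all_field.
Set Implicit Arguments. Unset Strict Implicit. Unset Printing Implicit Defensive.
Import GRing.Theory.
Local Open Scope ring_scope.

(* F plays the role of F_q, L the role of F_{q^m} (a finite extension of F). *)

Definition Fq_lin_aut (F : fieldType) (L : fieldExtType F) (phi : L -> L) : Prop :=
  (forall (a : F) (x y : L), phi (a *: x + y) = a *: phi x + phi y) /\ bijective phi.

Definition is_Lsubspace (L : fieldType) (N : nat) (S : 'rV[L]_N -> Prop) : Prop :=
  S 0 /\ forall (a : L) (u v : 'rV[L]_N), S u -> S v -> S (a *: u + v).

Definition img_code (L : fieldType) (N : nat) (phi : L -> L) (S : 'rV[L]_N -> Prop)
  : 'rV[L]_N -> Prop :=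
  fun v => exists2 w, S w & v = map_mx phi w.

Definition linear_on (L : fieldType) (N : nat) (phi : L -> L) (S : 'rV[L]_N -> Prop) : Prop :=
  is_Lsubspace (img_code phi S).

Definition fully_linear (L : fieldType) (phi : L -> L) : Prop :=
  forall (N : nat) (S : 'rV[L]_N -> Prop), is_Lsubspace S -> linear_on phi S.

Definition polynomial_element (F : fieldType) (L : fieldExtType F) (alpha : L) : Prop :=
  basis_of fullv (mkseq (fun i => alpha ^+ i) (\dim {:L})).

Definition code_of (L : fieldType) (k N : nat) (G : 'M[L]_(k, N)) : 'rV[L]_N -> Prop :=
  fun v => (v <= G)%MS.

(* Main.v *)
Require Import Defs.
From HB Require Import structures.
From mathcomp Require Import all_boot all_order all_algebra all_field.
Import GRing.Theory.
Local Open Scope ring_scope.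

Definition Flin {F : fieldType} {L : fieldExtType F} (phi : L -> L) :=
  forall (a : F) (x y : L), phi (a *: x + y) = a *: phi x + phi y.

Lemma phi0 {F : fieldType} {L : fieldExtType F} {phi : L -> L} :
  Flin phi -> phi 0 = 0.
Proof. by move=> H; have := H (-1) 0 0; rewrite scaler0 addr0 scaleN1r addNr. Qed.

Lemma phiD {F : fieldType} {L : fieldExtType F} {phi : L -> L} :
  Flin phi -> forall x y, phi (x + y) = phi x + phi y.
Proof. by move=> H x y; have := H 1 x y; rewrite !scale1r. Qed.

Lemma phiZ {F : fieldType} {L : fieldExtType F} {phi : L -> L} :
  Flin phi -> forall a x, phi (a *: x) = a *: phi x.
Proof. by move=> H a x; have := H a x 0; rewrite !addr0 (phi0 H) addr0. Qed.

Lemma inv_Flin {F : fieldType} {L : fieldExtType F} (phi psi : L -> L) :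
  Flin phi -> cancel phi psi -> cancel psi phi -> Flin psi.
Proof.
move=> H c1 c2 a x y; apply: (can_inj c1).
by rewrite c2 H !c2.
Qed.

Lemma code_stable {F : fieldType} {L : fieldExtType F} k r (A : 'M[L]_(k, r))
  (hA : forall i j, exists c : F, A i j = c%:A) (phi : L -> L) :
  Flin phi -> forall w : 'rV[L]_(k + r), (w <= row_mx 1%:M A)%MS -> (map_mx phi w <= row_mx 1%:M A)%MS.
Proof.
move=> H w /submxP [u ->]; rewrite mul_mx_row mulmx1 map_row_mx.
have -> : map_mx phi (u *m A) = map_mx phi u *m A.
  apply/matrixP=> a b; rewrite !mxE (big_morph phi (phiD H) (phi0 H)).
  apply: eq_bigr => l _; rewrite !mxE.
  by have [c ->] := hA l b; rewrite !mulr_algr phiZ.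
by apply/submxP; exists (map_mx phi u); rewrite mul_mx_row mulmx1.
Qed.

Lemma code_sub (L : fieldType) k N (G : 'M[L]_(k, N)) : is_Lsubspace (code_of G).
Proof.
split; first exact: sub0mx.
by move=> a u v hu hv; rewrite /code_of addmx_sub // scalemx_sub.
Qed.

Lemma phi1_neq0 {F : fieldType} {L : fieldExtType F} {phi psi : L -> L} :
  Flin phi -> cancel phi psi -> phi 1 != 0.
Proof.
move=> H c1; apply/eqP=> h; have := congr1 psi h.
by rewrite -(phi0 H) !c1; apply/eqP; rewrite oner_eq0.
Qed.

Lemma mult_alpha {F : fieldType} {L : fieldExtType F} k r (A : 'M[L]_(k, r))
  (phi psi : L -> L) : Flin phi -> cancel phi psi ->
  linear_on phi (code_of (row_mx 1%:M A)) -> forall i j x,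
  phi (x * A i j) * phi 1 = phi x * phi (A i j).
Proof.
move=> H c1 [H0 Hcl] i j x.
have p1 := phi1_neq0 H c1.
pose a := phi x / phi 1.
have h1 : img_code phi (code_of (row_mx 1%:M A)) (map_mx phi ('e_i *m row_mx 1%:M A)).
  by exists ('e_i *m row_mx 1%:M A) => //; apply: submxMl.
have [w /submxP [u ->] Hw] := Hcl a _ _ h1 H0.
move: Hw; rewrite addr0 !mul_mx_row !mulmx1 !map_row_mx scale_row_mx.
move/eq_row_mx=> [Hl Hr].
have hu : u = x *: 'e_i.
  apply/matrixP=> p l; rewrite (ord1 p); apply: (can_inj c1).
  have := congr1 (fun M : 'rV[L]_k => M 0 l) Hl; rewrite !mxE => <-.
  rewrite eqxx /=; case: (l == i) => /=.
    by rewrite mulr1 /a divfK.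
  by rewrite mulr0 (phi0 H) mulr0.
move: Hr; rewrite hu -scalemxAl -rowE => /(congr1 (fun M : 'rV[L]_r => M 0 j)).
rewrite !mxE => <-.
by rewrite /a mulrAC divfK.
Qed.

Lemma mult_all {F : fieldType} {L : fieldExtType F} (phi psi : L -> L) alpha :
  Flin phi -> cancel phi psi -> polynomial_element alpha ->
  (forall x, phi (x * alpha) * phi 1 = phi x * phi alpha) ->
  forall a x, phi (a * x) * phi 1 = phi a * phi x.
Proof.
move=> H c1 Hb M.
have p1 := phi1_neq0 H c1.
pose c := phi alpha / phi 1.
have M1 : forall y, phi (alpha * y) = c * phi y.
  by move=> y; apply: (mulIf p1); rewrite [alpha * y]mulrC M /c mulrAC divfK // mulrC.
have Mt t : forall x, phi (alpha ^+ t * x) = c ^+ t * phi x.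
  elim: t => [|n IH] z; first by rewrite !expr0 !mul1r.
  by rewrite exprS -mulrA M1 IH mulrA exprS.
suff Hall : forall a, exists d, forall x, phi (a * x) = d * phi x.
  move=> a x; have [d Hd] := Hall a; rewrite Hd.
  have := Hd 1; rewrite mulr1 => ->; by rewrite mulrAC.
move=> a.
pose X := mkseq (fun i => alpha ^+ i) (\dim {:L}).
move: Hb; rewrite /polynomial_element -/X => /andP [/eqP Hs _].
have ha : a \in <<in_tuple X>>%VS by rewrite /= Hs memvf.
exists (\sum_i coord (in_tuple X) i a *: c ^+ i) => x.
rewrite {1}(coord_span ha) mulr_suml (big_morph phi (phiD H) (phi0 H)) mulr_suml.
apply: eq_bigr => i _.
rewrite -scalerAl (phiZ H) (_ : (in_tuple X)`_i = alpha ^+ i) ?Mt ?scalerAl //.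
by rewrite /= nth_mkseq // -(size_mkseq (fun i => alpha ^+ i) (\dim {:L})).
Qed.

Lemma mult_full {F : fieldType} {L : fieldExtType F} (phi psi : L -> L) :
  Flin phi -> cancel phi psi -> cancel psi phi ->
  (forall a x, phi (a * x) * phi 1 = phi a * phi x) -> fully_linear phi.
Proof.
move=> H c1 c2 M N S [S0 Scl].
have p1 := phi1_neq0 H c1.
split.
  exists 0 => //; apply/matrixP=> p l; rewrite !mxE (phi0 H).
  by rewrite /GRing.zero /=.
move=> a _ _ [u hu ->] [v hv ->].
pose b := psi (a * phi 1).
exists (b *: u + v); first exact: Scl.
apply/matrixP=> p l; rewrite !mxE (phiD H); congr (_ + _).
apply: (mulIf p1); by rewrite M c2 mulrAC.
Qed.

Theorem theorem1 (F : finFieldType) (L : fieldExtType F) (k r : nat)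
  (A : 'M[L]_(k, r)) :
  (0 < k)%N -> (0 < r)%N ->
  let C := code_of (row_mx 1%:M A) in
  ((forall i j, exists c : F, A i j = c%:A) ->
     forall phi : L -> L, Fq_lin_aut phi ->
       (forall v, img_code phi C v <-> C v) /\ linear_on phi C)
  /\
  ((exists i j, polynomial_element (A i j)) ->
     forall phi : L -> L, Fq_lin_aut phi ->
       (fully_linear phi <-> linear_on phi C)).
Proof.
move=> _ _ C; split.
  move=> hA phi [H [psi c1 c2]].
  have Hpsi := inv_Flin phi psi H c1 c2.
  have eqv : forall v, img_code phi C v <-> C v.
    move=> v; split.
      by move=> [w hw ->]; apply: code_stable.
    move=> hv; exists (map_mx psi v); first exact: code_stable.
    by apply/matrixP=> p l; rewrite !mxE c2.
  split=> //; split.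
    by apply/eqv; apply: sub0mx.
  move=> a u v /eqv hu /eqv hv; apply/eqv; move: hu hv; rewrite /C /code_of => hu hv; by rewrite addmx_sub // scalemx_sub.
move=> [i [j Hp]] phi [H [psi c1 c2]]; split.
  by move=> Hf; apply: Hf; apply: code_sub.
move=> Hl; apply: (mult_full phi psi H c1 c2).
apply: (mult_all phi psi (A i j) H c1 Hp).
exact: (mult_alpha _ _ A phi psi H c1 Hl i j).
Qed.
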